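(* Let $k\geq 3$ be an integer and $\ell\geq 2$ an even integer, and let $G_1^{\{\ell,k\}}$ and $G_2^{\{\ell,k\}}$ be the indistinguishability graphs (for a fixed permutation $\sigma\neq\mathrm{id}$ of $[k]$). Let $\chi_1$ and $\chi_2$ be arbitrary $k$-partial $k$-colorings of $G_1^{\{\ell,k\}}$ and $G_2^{\{\ell,k\}}$, respectively. Then (1) $\chi_1((i,1))=\chi_1((i,\ell))$ for every $i\in[k]$; and (2) there exists $j\in[k]$ with $\chi_2((j,1))\neq\chi_2((j,\ell))$.
   Context: Let $[m]=\{1,\dots,m\}$. A $k$-partial $c$-coloring of a graph $H=(V,E)$ is a map $\gamma:V\to\{1,\dots,c\}$ such that every vertex $v$ has at least $\min\{k,\deg_H(v)\}$ neighbors $u$ with $\gamma(u)\neq\gamma(v)$. Path of cliques: for permutations $\tau_1,\dots,\tau_{\ell-1}$ of $[k]$, $P(\tau_1,\dots,\tau_{\ell-1})$ has vertex set $[k]\times[\ell]$ and edges $\{(a,i),(b,i)\}$ for $a\neq b$, $i\in[\ell]$, and $\{(a,i),(b,i+1)\}$ for $i\in[\ell-1]$, $a,b\in[k]$, $b\neq\tau_i(a)$. The $k$-edge-gadget transformation: given a graph $G$ and for each edge a chosen ordered pair $(u,v)$, keep all vertices of $G$, delete each edge $\{u,v\}$, and add $k$ new vertices $(u,v,1),\dots,(u,v,k)$ forming a clique together with edges $\{u,(u,v,j)\}$ for $j=1,\dots,k-1$ and $\{v,(u,v,k)\}$. Indistinguishability graphs: let $G_1=P(\tau_1,\dots,\tau_{\ell-1})$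 with all $\tau_i=\mathrm{id}$, and $G_2=P(\tau_1',\dots,\tau_{\ell-1}')$ with $\tau_i'=\mathrm{id}$ for $i\neq \ell/2$ and $\tau'_{\ell/2}=\sigma$, where $\sigma$ is a fixed permutation of $[k]$ different from the identity. $G_1^{\{\ell,k\}}$ (resp. $G_2^{\{\ell,k\}}$) is obtained from $G_1$ (resp. $G_2$) by the $k$-edge-gadget transformation, where an edge $\{(a,i),(b,i)\}$ with $a<b$ is oriented as $((a,i),(b,i))$ and an edge $\{(a,i),(b,i+1)\}$ is oriented as $((a,i),(b,i+1))$. The vertices $(i,1)$ and $(i,\ell)$ are original vertices of the path of cliques. *)

(* Defs.v *)
From HB Require Import structures.
From mathcomp Require Import all_boot all_order all_fingroup.
Set Implicit Arguments. Unset Strict Implicit. Unset Printing Implicit Defensive.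

(* Conventions: [k] is 'I_k (0-indexed), [l] is 'I_l; vertex (a,i) of the
   path of cliques is the pair (a, i) : 'I_k * 'I_l. *)

Definition partial_coloring (V : finType) (adj : rel V) (k c : nat)
  (g : V -> 'I_c) : Prop :=
  forall v : V,
    minn k #|[set u | adj v u]| <= #|[set u | adj v u & g u != g v]|.

(* Path of cliques P(tau_1,...,tau_{l-1}); tau i (0-indexed column i) is the
   permutation between column i and column i+1 (= tau_{i+1} of the paper). *)
Definition path_cliques (k l : nat) (tau : nat -> {perm 'I_k})
  : rel ('I_k * 'I_l) :=
  fun x y =>
    [|| (x.2 == y.2) && (x.1 != y.1),
        (y.2 == x.2.+1 :> nat) && (y.1 != tau x.2 x.1)
      | (x.2 == y.2.+1 :> nat) && (x.1 != tau y.2 y.1)].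

Definition path_cliques_or (k l : nat) (tau : nat -> {perm 'I_k})
  : rel ('I_k * 'I_l) :=
  fun x y => path_cliques tau x y &&
    (if x.2 == y.2 then x.1 < y.1 else y.2 == x.2.+1 :> nat).

(* Vertices of the k-edge-gadget transformation of a graph on T whose edges
   are given with orientation o (o u v: edge {u,v} oriented as (u,v)):
   the original vertices, plus (u,v,j) for every oriented edge, j in [k]. *)
Definition gadget_vertex (T : finType) (k : nat) (o : rel T) :=
  (T + {x : T * T * 'I_k | o x.1.1 x.1.2})%type.

(* Adjacency: the (u,v,_) form a clique; u ~ (u,v,j) for j = 1..k-1
   (0-indexed j < k-1); v ~ (u,v,k) (0-indexed j = k-1); all edges of the
   original graph are deleted. *)
Definition gadget_adj (T : finType) (k : nat) (o : rel T)
  : rel (gadget_vertex k o) :=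
  fun x y =>
    match x, y with
    | inl _, inl _ => false
    | inr p, inr q => ((val p).1 == (val q).1) && ((val p).2 != (val q).2)
    | inl w, inr p | inr p, inl w =>
        let '(u, v, j) := val p in
        ((w == u) && (j < k.-1)) || ((w == v) && (j == k.-1 :> nat))
    end.

Definition tau_G1 (k : nat) : nat -> {perm 'I_k} := fun _ => 1%g.
(* tau'_{l/2} = sigma (1-indexed), i.e. 0-indexed column i with i+1 = l/2 *)
Definition tau_G2 (k l : nat) (sigma : {perm 'I_k}) : nat -> {perm 'I_k} :=
  fun i => if i.+1 == l./2 then sigma else 1%g.

Definition G1_vertex (k l : nat) :=
  gadget_vertex k (@path_cliques_or k l (tau_G1 k)).
Definition G1_adj (k l : nat) : rel (G1_vertex k l) :=
  @gadget_adj _ k (@path_cliques_or k l (tau_G1 k)).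
Definition G2_vertex (k l : nat) (sigma : {perm 'I_k}) :=
  gadget_vertex k (@path_cliques_or k l (tau_G2 l sigma)).
Definition G2_adj (k l : nat) (sigma : {perm 'I_k}) : rel (G2_vertex l sigma) :=
  @gadget_adj _ k (@path_cliques_or k l (tau_G2 l sigma)).

(* Main.v *)
Require Import Defs.
From HB Require Import structures.
From mathcomp Require Import all_boot all_order all_fingroup.
From mathcomp Require Import zify.

Lemma gadget_proper (T : finType) (k : nat) (o : rel T)
  (g : gadget_vertex k o -> 'I_k) :
  0 < k -> partial_coloring (@gadget_adj T k o) k g ->
  forall u v, o u v -> g (inl u) != g (inl v).
Proof.
move=> k0 Hg u v h.
pose p (j : 'I_k) : gadget_vertex k o :=
  inr (exist (fun x : T * T * 'I_k => o x.1.1 x.1.2) (u, v, j) h).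
have all_diff : forall j y, gadget_adj (p j) y -> g y != g (p j).
  move=> j y Hy.
  set S := [set y | gadget_adj (p j) y].
  set D := [set y | gadget_adj (p j) y & g y != g (p j)].
  have HS : #|S| <= k.
    pose f (j' : 'I_k) : gadget_vertex k o :=
      if j' == j then (if j < k.-1 then inl u else inl v) else p j'.
    have sub : S \subset f @: setT.
      apply/subsetP => z; rewrite inE.
      case: z => [w|q] /=.
        move=> /orP [/andP [/eqP -> hj]|/andP [/eqP -> /eqP hj]].
          by apply/imsetP; exists j => //; rewrite /f eqxx hj.
        apply/imsetP; exists j => //; rewrite /f eqxx hj.
        by rewrite ltnn.
      case: q => [[[u' v'] j'] hq] /= /andP [/eqP e ne].
      case: e => e1 e2; subst u' v'.
      have ne' : (j' == j) = false by rewrite eq_sym (negbTE ne).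
      apply/imsetP; exists j' => //; rewrite /f ne' /p.
      by congr inr; apply: val_inj.
    apply: (leq_trans (subset_leq_card sub)).
    by apply: (leq_trans (leq_imset_card _ _)); rewrite cardsT card_ord.
  have := Hg (p j); rewrite -/S -/D (minn_idPr HS) => HD.
  have DS : D \subset S by apply/subsetP => z; rewrite !inE => /andP [].
  have : D == S by rewrite eqEcard DS HD.
  move/eqP => eDS.
  have : y \in D by rewrite eDS inE.
  by rewrite inE => /andP [].
have inj : injective (fun j => g (p j)).
  move=> j j' /= e; apply/eqP; apply/negPn/negP => ne.
  have := all_diff j (p j'); rewrite /= eqxx.
  by rewrite ne e eqxx => /(_ isT).
have := inj_card_onto inj (leqnn _) (g (inl u)).
move=> /codomP [j0 e0].
have hj0 : ~~ (j0 < k.-1).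
  apply/negP => lt; have := all_diff j0 (inl u).
  by rewrite /= eqxx lt e0 eqxx => /(_ isT).
have ej0 : j0 == k.-1 :> nat.
  have := ltn_ord j0; move: hj0; rewrite -ltnNge => a b.
  apply/eqP; lia.
have := all_diff j0 (inl v); rewrite /= eqxx ej0 orbT -e0 eq_sym.
by move=> /(_ isT).
Qed.

Section PathPart.
Variables (k l : nat) (tau : nat -> {perm 'I_k}).
Variable g : gadget_vertex k (@path_cliques_or k l tau) -> 'I_k.
Hypothesis k0 : 0 < k.
Hypothesis Hg : partial_coloring (@gadget_adj _ k (@path_cliques_or k l tau)) k g.

Let c (x : 'I_k * 'I_l) := g (inl x).

Lemma col_inj (i : 'I_l) : injective (fun a => c (a, i)).
Proof.
move=> a b /= e; apply/eqP; apply/negPn/negP => nab.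
have [lt|lt|eq] := ltngtP a b.
- have h : path_cliques_or tau (a, i) (b, i).
    by rewrite /path_cliques_or /path_cliques /= eqxx nab lt.
  by have := @gadget_proper _ _ _ g k0 Hg _ _ h; rewrite /c in e; rewrite e eqxx.
- have h : path_cliques_or tau (b, i) (a, i).
    by rewrite /path_cliques_or /path_cliques /= eqxx eq_sym nab lt.
  by have := @gadget_proper _ _ _ g k0 Hg _ _ h; rewrite /c in e; rewrite e eqxx.
- by move: nab; rewrite -val_eqE /= eq eqxx.
Qed.

Lemma step (a : 'I_k) (i j : 'I_l) : val j = (val i).+1 ->
  c (a, i) = c (tau i a, j).
Proof.
move=> hj.
have := inj_card_onto (@col_inj j) (leqnn _) (c (a, i)).
move=> /codomP [b eb]; rewrite eb.
have [->|nb] := eqVneq b (tau i a) => //.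
have h : path_cliques_or tau (a, i) (b, j).
  have ij : (i == j) = false.
    by rewrite -val_eqE /= hj ltn_eqF.
  by rewrite /path_cliques_or /path_cliques /= ij hj eqxx nb.
by have := @gadget_proper _ _ _ g k0 Hg _ _ h; rewrite /c in eb; rewrite eb eqxx.
Qed.

Lemma chain (a : 'I_k) (m : nat) : forall n, m <= n ->
  (forall i, m <= i < n -> tau i = 1%g) ->
  forall pm pn : 'I_l, val pm = m -> val pn = n -> c (a, pm) = c (a, pn).
Proof.
elim=> [|n IH] hmn ht pm pn em en.
  have -> : pm = pn by apply: val_inj; rewrite em en; lia.
  by [].
have [emn|lmn] := eqVneq m n.+1.
  have -> : pm = pn by apply: val_inj; rewrite em en.
  by [].
have hmn' : m <= n by lia.
have hn : n < l by have := ltn_ord pn; rewrite en; lia.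
rewrite (IH hmn' _ pm (Ordinal hn) em erefl).
  by rewrite (@step a (Ordinal hn) pn) /= ?en // ht ?perm1 //; lia.
by move=> i hi; apply: ht; lia.
Qed.

End PathPart.

Theorem fact1 (k l : nat) (hk : 3 <= k) (hl : 2 <= l) (hev : ~~ odd l)
  (sigma : {perm 'I_k}) (hsigma : sigma != 1%g)
  (chi1 : G1_vertex k l -> 'I_k) (chi2 : G2_vertex l sigma -> 'I_k) :
  partial_coloring (@G1_adj k l) k chi1 ->
  partial_coloring (@G2_adj k l sigma) k chi2 ->
  (forall (i : 'I_k) (p q : 'I_l), val p = 0 -> val q = l.-1 ->
     chi1 (inl (i, p)) = chi1 (inl (i, q))) /\
  (exists (j : 'I_k) (p q : 'I_l), [/\ val p = 0, val q = l.-1 &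
     chi2 (inl (j, p)) != chi2 (inl (j, q))]).
Proof.
move=> H1 H2.
have k0 : 0 < k by lia.
split.
  move=> i p q ep eq.
  apply: (@chain k l (tau_G1 k) chi1 k0 H1 i 0 l.-1) => //.
have : ~~ [forall j, sigma j == j].
  apply: contra hsigma => /forallP H; apply/eqP/permP => x.
  by rewrite perm1; apply/eqP.
rewrite negb_forall => /existsP [j hj].
have hh := odd_double_half l; rewrite (negbTE hev) /= in hh.
have h0 : 0 < l by lia.
have ha : l./2.-1 < l by lia.
have hb : l./2 < l by lia.
have hq : l.-1 < l by lia.
pose p0 : 'I_l := Ordinal h0. pose pa : 'I_l := Ordinal ha.
pose pb : 'I_l := Ordinal hb. pose pq : 'I_l := Ordinal hq.
have key : forall x, chi2 (inl (x, p0)) = chi2 (inl (sigma x, pq)).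
  move=> x.
  have e1 : chi2 (inl (x, p0)) = chi2 (inl (x, pa)).
    apply: (@chain k l (tau_G2 l sigma) chi2 k0 H2 x 0 l./2.-1) => //.
    move=> i hi; rewrite /tau_G2; case: ifP => //; move/eqP => ?; lia.
  rewrite e1 (@step k l (tau_G2 l sigma) chi2 k0 H2 x pa pb); last by rewrite /=; lia.
  have -> : tau_G2 l sigma pa = sigma.
    by rewrite /tau_G2 /=; case: ifP => //; move/eqP; lia.
  apply: (@chain k l (tau_G2 l sigma) chi2 k0 H2 _ l./2 l.-1) => //.
  - lia.
  - move=> i hi; rewrite /tau_G2; case: ifP => //; move/eqP => ?; lia.
exists j, p0, pq; split => //.
rewrite key; apply/negP => /eqP e.
have := @col_inj k l (tau_G2 l sigma) chi2 k0 H2 pq _ _ e.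
by move=> es; move: hj; rewrite es eqxx.
Qed.
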